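(* Let $R$ be a commutative ring with identity, $n>1$, $S=M_n(R)$. If $A\in S$ and $c\in R$ is a nonzero element with $c\det A=0$, then there exists a nonzero matrix $C\in cS=\{cX: X\in S\}$ with $AC=CA=0$. *)

(* Defs.v *)
From mathcomp Require Import all_boot all_algebra.
Set Implicit Arguments. Unset Strict Implicit. Unset Printing Implicit Defensive.

(* Main.v *)
Require Import Defs.
From mathcomp Require Import all_boot all_algebra.
From Stdlib Require Classical_Prop.
Import GRing.Theory.
Local Open Scope ring_scope.

Lemma keyL (R : comNzRingType) n k (A : 'M[R]_n) (c : R) (p q : 'I_k -> 'I_n)
 (Hz : forall f g : 'I_k -> 'I_n, c * \det (mxsub f g A) = 0) :
 c *: (colsub q A *m \adj (mxsub p q A)) = 0 /\
 c *: (\adj (mxsub p q A) *m rowsub p A) = 0.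
Proof.
split; apply/matrixP => r u; rewrite !mxE.
- set p' := fun w => if w == u then r else p w.
  have := Hz p' q; rewrite (expand_det_row _ u) => H; rewrite -[RHS]H; congr (_ * _).
  apply: eq_bigr => v _; rewrite !mxE /p' eqxx; congr (_ * _).
  rewrite /cofactor; congr (_ * \det _); apply/matrixP => i j; rewrite !mxE.
  by rewrite eq_sym (negbTE (neq_lift u i)).
- set q' := fun w => if w == r then u else q w.
  have := Hz p q'; rewrite (expand_det_col _ r) => H; rewrite -[RHS]H; congr (_ * _).
  apply: eq_bigr => v _; rewrite !mxE /q' eqxx mulrC; congr (_ * _).
  rewrite /cofactor; congr (_ * \det _); apply/matrixP => i j; rewrite !mxE.
  by rewrite eq_sym (negbTE (neq_lift r j)).
Qed.

Lemma colsub1_mul (R : comNzRingType) n k m (q : 'I_k -> 'I_n) (M : 'M[R]_(k, m))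
  (hq : injective q) v0 r : (colsub q 1%:M *m M) (q v0) r = M v0 r.
Proof.
rewrite mxE (bigD1 v0) //= big1 ?addr0 => [|v hv]; rewrite !mxE.
  by rewrite eqxx mul1r.
by rewrite (inj_eq hq) eq_sym (negbTE hv) mul0r.
Qed.

Lemma mul_rowsub1 (R : comNzRingType) n k m (p : 'I_k -> 'I_n) (M : 'M[R]_(m, k))
  (hp : injective p) u0 r : (M *m rowsub p 1%:M) r (p u0) = M r u0.
Proof.
rewrite mxE (bigD1 u0) //= big1 ?addr0 => [|v hv]; rewrite !mxE.
  by rewrite eqxx mulr1.
by rewrite (inj_eq hp) (negbTE hv) mulr0.
Qed.

Theorem corollary1 (R : comNzRingType) (n : nat) (hn : (1 < n)%N)
  (A : 'M[R]_n) (c : R) (hc : c != 0) (hdet : c * \det A = 0) :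
  exists2 C : 'M[R]_n, C != 0 &
    (exists X : 'M[R]_n, C = c *: X) /\ A *m C = 0 /\ C *m A = 0.
Proof.
pose Zs m := forall f g : 'I_m -> 'I_n, c * \det (mxsub f g A) = 0.
have Zn : Zs n.
  move=> f g; rewrite mxsubrc rowsubE -[A in colsub _ A]mulmx1 -mulmx_colsub.
  by rewrite !det_mulmx !mulrA (mulrC c) -(mulrA _ c) hdet mulr0 mul0r.
have Z0 : ~ Zs 0.
  by move=> H; move: (H (fun i => match i with Ordinal _ h => ltac:(by []) end) (fun i => match i with Ordinal _ h => ltac:(by []) end)); rewrite det_mx00 mulr1 => /eqP; rewrite (negbTE hc).
have [k [kn [nZk Zk1]]] : exists k, (k < n)%N /\ ~ Zs k /\ Zs k.+1.
  have H : forall m, (m <= n)%N -> (exists k, (k < n)%N /\ ~ Zs k /\ Zs k.+1) \/ ~ Zs m.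
    elim => [|m IH] hm; first by right.
    case: (IH (ltnW hm)) => [?|nZm]; first by left.
    case: (Classical_Prop.classic (Zs m.+1)) => [Zm|]; last by right.
    by left; exists m.
  by case: (H n (leqnn n)).
have [f [g Hfg]] : exists f g : 'I_k -> 'I_n, c * \det (mxsub f g A) <> 0.
  apply: Classical_Prop.NNPP => H; apply: nZk => f g.
  apply: Classical_Prop.NNPP => H2; apply: H; by exists f, g.
have injf : injective f.
  move=> x y Hxy; apply/eqP; apply: contraT => Hne; exfalso; apply: Hfg.
  by rewrite (determinant_alternate Hne) ?mulr0 // => j; rewrite !mxE Hxy.
have injg : injective g.
  move=> x y Hxy; apply/eqP; apply: contraT => Hne; exfalso; apply: Hfg.
  by rewrite -det_tr (determinant_alternate Hne) ?mulr0 // => j; rewrite !mxE Hxy.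
have notcod : forall h : 'I_k -> 'I_n, injective h -> exists i0, i0 \notin codom h.
  move=> h hi; case: (pickP (fun i => i \notin codom h)) => [i0 Hi0|H]; first by exists i0.
  have : 'I_n \subset codom h by apply/subsetP => i _; apply: negbFE; exact: H.
  move/subset_leq_card; rewrite card_codom // !card_ord => hnk.
  by move: (leq_trans kn hnk); rewrite ltnn.
have [i0 hi0] := notcod f injf.
have [j0 hj0] := notcod g injg.
pose p (w : 'I_k.+1) := if unlift ord_max w is Some v then f v else i0.
pose q (w : 'I_k.+1) := if unlift ord_max w is Some v then g v else j0.
have pl i : p (lift ord_max i) = f i by rewrite /p liftK.
have ql i : q (lift ord_max i) = g i by rewrite /q liftK.
have pm : p ord_max = i0 by rewrite /p unlift_none.
have qm : q ord_max = j0 by rewrite /q unlift_none.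
have injp : injective p.
  move=> x y; case: (unliftP ord_max x) => [x'|] ->; case: (unliftP ord_max y) => [y'|] ->;
   rewrite ?pl ?pm // => H.
  - by rewrite (injf _ _ H).
  - by move: hi0; rewrite -H codom_f.
  - by move: hi0; rewrite H codom_f.
have injq : injective q.
  move=> x y; case: (unliftP ord_max x) => [x'|] ->; case: (unliftP ord_max y) => [y'|] ->;
   rewrite ?ql ?qm // => H.
  - by rewrite (injg _ _ H).
  - by move: hj0; rewrite -H codom_f.
  - by move: hj0; rewrite H codom_f.
have [K1 K2] := @keyL R n k.+1 A c p q Zk1.
pose X := colsub q 1%:M *m \adj (mxsub p q A) *m rowsub p 1%:M.
exists (c *: X); last split.
- apply/eqP => /matrixP /(_ (q ord_max) (p ord_max)).
  rewrite [RHS]mxE mxE /X mul_rowsub1 // colsub1_mul // mxE /cofactor.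
  rewrite -signr_odd addnn odd_double expr0 mul1r => H; apply: Hfg; rewrite -[RHS]H.
  congr (_ * \det _); apply/matrixP => i j; rewrite !mxE pl ql //.
- by exists X.
- split.
  + by rewrite /X -scalemxAr !mulmxA mulmx_colsub mulmx1 scalemxAl K1 mul0mx.
  + by rewrite /X -scalemxAl -!mulmxA -rowsubE scalemxAr K2 mulmx0.
Qed.
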